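(* Let $n\ge 3$, let $\pi\in S_{n-2}$, and let $\tau\in S_n$ be the permutation $\tau=n\,(\pi_1+1)(\pi_2+1)\cdots(\pi_{n-2}+1)\,1$ (in one-line notation). Then $\pi$ is shallow if and only if $\tau$ is shallow.
   Context: For $\pi\in S_n$: $D(\pi)=\sum_{i}|\pi_i-i|$, $I(\pi)$ is the number of inversions, $T(\pi)=n-\mathrm{cyc}(\pi)$ with $\mathrm{cyc}$ the number of cycles in the disjoint cycle decomposition; $\pi$ is shallow if $I(\pi)+T(\pi)=D(\pi)$. *)

(* Defs.v *)
From mathcomp Require Import all_boot all_order all_algebra all_fingroup.
Set Implicit Arguments. Unset Strict Implicit. Unset Printing Implicit Defensive.

(* Permutations of 'I_n = {0,...,n-1} (0-indexed version of {1,...,n}). *)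

Definition displacement n (p : 'S_n) : nat :=
  \sum_(i < n) `|(p i : nat) - (i : nat)|%N.

Definition inversions n (p : 'S_n) : nat :=
  #|[set ij : 'I_n * 'I_n | (ij.1 < ij.2) && (p ij.2 < p ij.1)]|.

Definition ncycles n (p : 'S_n) : nat := #|porbits p|.
Definition reflength n (p : 'S_n) : nat := n - ncycles p.

Definition shallow n (p : 'S_n) : bool :=
  inversions p + reflength p == displacement p.

(* Main.v *)
Require Import Defs.
From mathcomp Require Import all_boot all_order all_algebra all_fingroup.
From mathcomp Require Import zify.
Set Implicit Arguments. Unset Strict Implicit. Unset Printing Implicit Defensive.

Lemma displE n (p : 'S_n.+1) :
  displacement p = \sum_(0 <= i < n.+1) `|(p (inord i) : nat) - i|%N.
Proof. by rewrite /displacement big_mkord; apply: eq_bigr => i _; rewrite inord_val. Qed.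

Lemma invE n (p : 'S_n.+1) :
  inversions p = \sum_(0 <= i < n.+1) \sum_(0 <= j < n.+1)
     ((i < j) && ((p (inord j) : nat) < p (inord i))).
Proof.
rewrite /inversions -sum1dep_card big_mkcond /=.
rewrite -(pair_big predT predT (fun i j : 'I_n.+1 => (if (i < j) && (p j < p i) then 1 else 0))) /=.
rewrite big_mkord; apply: eq_bigr => i _; rewrite big_mkord; apply: eq_bigr => j _.
by rewrite !inord_val; case: ifP.
Qed.

Section S.
Local Open Scope group_scope.
Variables (k : nat) (pi : 'S_k.+1) (tau : 'S_k.+3).
Hypothesis htau : forall i : 'I_k.+3,
     (tau i : nat) = if (i : nat) == 0 then k.+2
                     else if (i : nat) == k.+2 then 0
                     else (pi (inord i.-1) : nat).+1.

Definition f (i : 'I_k.+1) : 'I_k.+3 := inord i.+1.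
Lemma fE i : (f i : nat) = i.+1.
Proof. by rewrite /f inordK // ltnS; apply: leq_trans (ltn_ord i) _. Qed.
Lemma f_inj : injective f.
Proof. by move=> i j /(congr1 (@nat_of_ord _)); rewrite !fE => -[] /val_inj. Qed.
Lemma tau_f i : tau (f i) = f (pi i).
Proof.
apply/val_inj => /=; rewrite htau !fE /=.
have := ltn_ord i; rewrite eqSS; case: eqP => [->|_]; first by rewrite ltnn.
by move=> _; congr (_.+1); congr (val (pi _)); apply/val_inj => /=; rewrite /= inordK.
Qed.
Lemma tauX_f n i : (tau ^+ n) (f i) = f ((pi ^+ n) i).
Proof.
elim: n => [|n IH]; first by rewrite !expg0 !perm1.
by rewrite !expgSr !permM IH tau_f.
Qed.
Lemma porbit_f i : porbit tau (f i) = f @: porbit pi i.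
Proof.
apply/setP => y; apply/porbitP/imsetP.
  by case=> n ->; exists ((pi ^+ n) i); [exact: mem_porbit | rewrite tauX_f].
by case=> z /porbitP [n ->] ->; exists n; rewrite tauX_f.
Qed.
Lemma tau0 : tau ord0 = ord_max.
Proof. by apply/val_inj => /=; rewrite /= htau. Qed.

Lemma ncycles_tau : ncycles tau = (ncycles pi).+1.
Proof.
rewrite /ncycles.
have -> : porbits tau = porbit tau ord0 |: [set f @: X | X : {set 'I_k.+1} in porbits pi].
  apply/setP => y; rewrite !inE; apply/idP/idP.
    case/imsetP => x _ ->.
    case: (eqVneq (x : nat) 0) => [x0|xn0].
      have -> : x = ord0 by apply/val_inj.
      by rewrite eqxx.
    case: (eqVneq (x : nat) k.+2) => [xm|xm].
      have -> : x = (tau ^+ 1) ord0 by rewrite expg1 tau0; apply/val_inj.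
      by rewrite porbit_perm eqxx.
    have -> : x = f (inord x.-1).
      apply/val_inj => /=; rewrite fE inordK; first by rewrite prednK // lt0n.
      have := ltn_ord x; lia.
    rewrite porbit_f; apply/orP; right; apply/imsetP; exists (porbit pi (inord x.-1)) => //.
    exact: imset_f.
  case/orP => [/eqP -> | /imsetP [X /imsetP [z _ ->] ->]]; first exact: imset_f.
  by rewrite -porbit_f; apply: imset_f.
rewrite cardsU1 card_imset; last exact: imset_inj f_inj.
suff -> : porbit tau ord0 \notin [set f @: X | X : {set 'I_k.+1} in porbits pi] by [].
apply/imsetP => -[X _ h].
have : ord0 \in porbit tau ord0 by exact: porbit_id.
by rewrite h => /imsetP [z _ /(congr1 (@nat_of_ord _))]; rewrite fE.
Qed.
Local Close Scope group_scope.
Lemma tv0 : (tau (inord 0) : nat) = k.+2.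
Proof. by rewrite htau inordK. Qed.
Lemma tvm : (tau (inord k.+2) : nat) = 0.
Proof. by rewrite htau inordK // -[_ == 0]/false eqxx. Qed.
Lemma tvS i : i < k.+1 -> (tau (inord i.+1) : nat) = (pi (inord i) : nat).+1.
Proof.
move=> hi; rewrite htau inordK /=; last by lia.
by have -> : (i.+1 == k.+2) = false by apply/eqP; lia.
Qed.
Lemma piB i : (pi (inord i) : nat) < k.+1.
Proof. exact: ltn_ord. Qed.

Lemma displ_tau : displacement tau = displacement pi + (k.+2).*2.
Proof.
rewrite !displE big_nat_recl // big_nat_recr //= tv0 tvm.
rewrite (eq_big_nat _ _ (F2 := fun i => `|(pi (inord i) : nat) - i|%N)).
  by rewrite dist0n -addnn; lia.
by move=> i /andP [_ hi]; rewrite tvS // -addn1 -(addn1 i) distnDr.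
Qed.

Lemma split3 n (F : nat -> nat) :
  \sum_(0 <= i < n.+3) F i = F 0 + \sum_(0 <= i < n.+1) F i.+1 + F n.+2.
Proof. by rewrite big_nat_recl // big_nat_recr // addnA. Qed.

Lemma inv_tau : inversions tau = inversions pi + (k.+1).*2.+1.
Proof.
rewrite !invE split3 split3 /= tv0 tvm /=.
rewrite (eq_big_nat _ _ (F2 := fun _ => 1)); last first.
  move=> j /andP [_ hj]; by rewrite tvS // ltnS piB.
rewrite sum_nat_const_nat.
rewrite [X in _ + X = _]big1_seq; last by move=> j _; rewrite ltn0 andbF.
rewrite (eq_big_nat _ _ (F2 := fun i => \sum_(0 <= j < k.+1)
     ((i < j) && ((pi (inord j) : nat) < pi (inord i))) + 1)); last first.
  move=> i /andP [_ hi].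
  rewrite split3 tvm tvS //= ltnS hi /=.
  congr (_ + _); apply: eq_big_nat => j /andP [_ hj].
  by rewrite !tvS // !ltnS.
rewrite big_split /= sum_nat_const_nat.
lia.
Qed.
End S.

Theorem lemma2p5 (k : nat) (pi : 'S_k.+1) (tau : 'S_k.+3)
  (htau : forall i : 'I_k.+3,
     (tau i : nat) = if (i : nat) == 0 then k.+2
                     else if (i : nat) == k.+2 then 0
                     else (pi (inord i.-1) : nat).+1) :
  shallow pi = shallow tau.
Proof.
rewrite /shallow /reflength (inv_tau htau) (displ_tau htau) (ncycles_tau htau).
have : ncycles pi <= k.+1.
  by rewrite /ncycles /porbits; apply: leq_trans (leq_imset_card _ _) _; rewrite card_ord.
move: (inversions pi) (displacement pi) (ncycles pi) => I D c h.
apply/eqP/eqP; lia.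
Qed.
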